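(* There is no binary linear $[n,k,d]$ code $C$ with $\mathbf{1}_n\in C$ such that, for some positive integer $t$, $$d^\perp-t=\#\{u \mid C_u\neq\emptyset,\ 0<u\le n-t\}=3,$$ the nonzero weights of $C$ are exactly $d,\ n/2,\ n-d,\ n$ (with $n$ even), and $d^\perp>8$.
   Context: $\mathbf{1}_n$ is the all-ones vector; $C^\perp$ is the dual code with respect to the standard inner product and $d^\perp$ its minimum nonzero weight; $C_u=\{c\in C:\mathrm{wt}(c)=u\}$ (Hamming weight). The paper notes that in the case $d^\perp-t=3$ the weight distribution of $C$ is supported on $0,d,n/2,n-d,n$ with $n$ even, and works under this assumption throughout. *)

(* Defs.v *)
From mathcomp Require Import all_boot all_order all_algebra.
Set Implicit Arguments. Unset Strict Implicit. Unset Printing Implicit Defensive.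
Import GRing.Theory.
Local Open Scope ring_scope.

Definition wt (n : nat) (v : 'rV['F_2]_n) : nat := #|[set i | v 0 i != 0]|.

(* C is a binary linear code: contains 0 and is closed under addition
   (over F_2 this is the same as being an F_2-subspace). *)
Definition linear_code (n : nat) (C : {set 'rV['F_2]_n}) : bool :=
  (0 \in C) && [forall x in C, forall y in C, x + y \in C].

Definition dual_code (n : nat) (C : {set 'rV['F_2]_n}) : {set 'rV['F_2]_n} :=
  [set y | [forall x in C, (x *m y^T) 0 0 == 0]].

Definition ones (n : nat) : 'rV['F_2]_n := const_mx 1.

Definition min_nz_weight (n : nat) (S : {set 'rV['F_2]_n}) (m : nat) : Prop :=
  (exists2 x, x \in S & (x != 0) && (wt x == m)%N) /\
  (forall x, x \in S -> x != 0 -> (m <= wt x)%N).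

Definition num_weights_upto (n : nat) (C : {set 'rV['F_2]_n}) (t : nat) : nat :=
  #|[set u : 'I_n.+1 | [&& [exists c in C, wt c == u], (0 < u)%N & (u <= n - t)%N]]|.

(* Main.v *)
Require Import Defs.
From mathcomp Require Import all_boot all_order all_algebra.
From mathcomp Require Import ring lra zify.
Set Implicit Arguments. Unset Strict Implicit. Unset Printing Implicit Defensive.
Import Order.TTheory GRing.Theory Num.Theory.
Local Open Scope ring_scope.

Lemma F2_cases (a : 'F_2) : a = 0 \/ a = 1.
Proof. by case: a => [[|[|//]]] Ha; [left|right]; apply/val_inj. Qed.

Definition sgn (b : 'F_2) : rat := if b == 0 then 1 else -1.

Lemma sgnD a b : sgn (a + b) = sgn a * sgn b.
Proof.
by case: (F2_cases a) => ->; case: (F2_cases b) => ->; rewrite /sgn /=.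
Qed.

Lemma sgn0 : sgn 0 = 1. Proof. by []. Qed.

Lemma F2_double (a : 'F_2) : a + a = 0.
Proof. case: (F2_cases a) => ->; first by rewrite addr0. by apply: val_inj. Qed.

Lemma rv_double n (x : 'rV['F_2]_n) : x + x = 0.
Proof. by apply/matrixP => i j; rewrite !mxE F2_double. Qed.

Lemma F2_neq0 (a : 'F_2) : a != 0 -> a = 1.
Proof. by case: (F2_cases a) => ->; rewrite ?eqxx. Qed.

Lemma dotDl n (x z y : 'rV['F_2]_n) :
  ((x + z) *m y^T) 0 0 = (x *m y^T) 0 0 + (z *m y^T) 0 0.
Proof. by rewrite mulmxDl mxE. Qed.

Lemma char_sum n (C : {set 'rV['F_2]_n}) y :
  linear_code C -> y \notin dual_code C ->
  \sum_(c in C) sgn ((c *m y^T) 0 0) = 0.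
Proof.
case/andP=> _ /forall_inP Hadd.
rewrite inE negb_forall_in => /existsP[x /andP[xC /F2_neq0 xy]].
have Hxx : forall c, (c + x \in C) = (c \in C).
  move=> c; apply/idP/idP => H.
    by have := Hadd _ H => /forall_inP/(_ _ xC); rewrite -addrA rv_double addr0.
  by have := Hadd _ H => /forall_inP/(_ _ xC).
set S := \sum_(c in C) _.
have HS : S = - S.
  rewrite {1}/S (reindex_inj (addIr x)) /=.
  rewrite (eq_bigl (fun c => c \in C)) => [|c]; last by rewrite Hxx.
  rewrite /S -sumrN; apply: eq_bigr => c _.
  by rewrite dotDl sgnD xy /sgn /= mulrN1.
have : S + S = 0 by rewrite {1}HS addNr.
by move/eqP; rewrite -mulr2n -mulr_natr mulf_eq0 => /orP[/eqP //|].
Qed.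

Definition supp n (c : 'rV['F_2]_n) : {set 'I_n} := [set i | c 0 i != 0].
Definition yv n (J : {set 'I_n}) : 'rV['F_2]_n := \row_k (if k \in J then 1 else 0).

Lemma dot_yv n (c : 'rV['F_2]_n) J : (c *m (yv J)^T) 0 0 = \sum_(k in J) c 0 k.
Proof.
rewrite mxE [RHS]big_mkcond /=; apply: eq_bigr => k _.
by rewrite !mxE; case: (k \in J); rewrite ?mulr1 ?mulr0.
Qed.

Lemma sgn_sum n (c : 'rV['F_2]_n) (J : {set 'I_n}) :
  sgn (\sum_(k in J) c 0 k) = \prod_(k in J) sgn (c 0 k).
Proof. exact: (big_morph sgn sgnD sgn0). Qed.

Lemma wt_yv n (J : {set 'I_n}) : wt (yv J) = #|J|.
Proof.
rewrite /wt; apply: eq_card => k; rewrite !inE mxE.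
by case: (k \in J); rewrite ?oner_eq0 ?eqxx.
Qed.

Lemma yv_neq0 n (J : {set 'I_n}) : J != set0 -> yv J != 0.
Proof.
case/set0Pn => k kJ; apply/eqP => /matrixP/(_ 0 k); rewrite !mxE kJ.
by move/eqP; rewrite oner_eq0.
Qed.

Lemma prod_ind n (c : 'rV['F_2]_n) (T : {set 'I_n}) :
  \prod_(i in T) (1 - sgn (c 0 i)) = if T \subset supp c then 2 ^+ #|T| else 0.
Proof.
case: ifP => HT.
  rewrite -prodr_const; apply: eq_bigr => i iT.
  have := subsetP HT i iT; rewrite inE => /F2_neq0 ->.
  by rewrite /sgn /= opprK.
case/subsetPn: HT => i iT; rewrite inE negbK => /eqP ci.
by rewrite (bigD1 i) //= ci /sgn eqxx subrr mul0r.
Qed.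

Lemma count_uniform n (C : {set 'rV['F_2]_n}) dp (T : {set 'I_n}) :
  linear_code C ->
  (forall y, y \in dual_code C -> y != 0 -> (dp <= wt y)%N) ->
  (#|T| < dp)%N ->
  (#|[set c in C | T \subset supp c]| * 2 ^ #|T|)%N = #|C|.
Proof.
move=> linC Hd HT.
apply/eqP; rewrite -(eqr_nat rat) natrM natrX; apply/eqP.
have E1 : \sum_(c in C) \prod_(i in T) (1 - sgn (c 0 i)) =
          (#|[set c in C | T \subset supp c]|)%:R * 2 ^+ #|T|.
  under eq_bigr => c _ do rewrite prod_ind.
  rewrite -big_mkcondr /= sumr_const [in RHS]mulr_natl; congr (_ *+ _).
  by apply: eq_card => c; rewrite inE.
rewrite -E1.
pose F (c : 'rV['F_2]_n) (i : 'I_n) : rat := if i \in T then - sgn (c 0 i) else 0.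
have E2 : forall c : 'rV['F_2]_n, \prod_(i in T) (1 - sgn (c 0 i)) =
   \sum_(J : {set 'I_n}) \prod_i (if i \in J then F c i else 1).
  move=> c; rewrite big_mkcond /=.
  rewrite (eq_bigr (fun i => F c i + 1)) => [|i _]; last first.
    by rewrite /F; case: (i \in T); rewrite ?add0r // addrC.
  exact: bigA_distr.
rewrite (eq_bigr _ (fun c _ => E2 c)) exchange_big (bigD1 set0) //=.
rewrite [X in _ + X]big1 ?addr0; last first.
  move=> J J0; case: (boolP (J \subset T)) => JT.
    have Hy : yv J \notin dual_code C.
      apply/negP => Hy; have := Hd _ Hy (yv_neq0 J0); rewrite wt_yv => HJ.
      have := subset_leq_card JT; lia.
    rewrite (eq_bigr (fun c => (-1) ^+ #|J| * sgn ((c *m (yv J)^T) 0 0))) => [|c _].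
      by rewrite -mulr_sumr (char_sum linC Hy) mulr0.
    rewrite -big_mkcond /= dot_yv sgn_sum -prodrN; apply: eq_bigr => i iJ.
    by rewrite /F (subsetP JT i iJ).
  case/subsetPn: JT => i iJ iT; apply: big1 => c _.
  by rewrite (bigD1 i) //= iJ /F (negbTE iT) mul0r.
rewrite -[RHS]sumr_const; apply: eq_bigr => c _.
by apply: big1 => i _; rewrite inE.
Qed.

Lemma card_cond (I : finType) (P Q : pred I) :
  (#|[set x | P x & Q x]| = \sum_(x | Q x) (P x : nat))%N.
Proof.
rewrite -sum1dep_card big_mkcond /= [RHS]big_mkcond /=; apply: eq_bigr => x _.
by case: (Q x); case: (P x).
Qed.

Lemma moment_nat n (C : {set 'rV['F_2]_n}) dp j :
  linear_code C ->
  (forall y, y \in dual_code C -> y != 0 -> (dp <= wt y)%N) ->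
  (j < dp)%N ->
  (2 ^ j * \sum_(c in C) 'C(wt c, j) = #|C| * 'C(n, j))%N.
Proof.
move=> linC Hd Hj.
have E : (\sum_(c in C) 'C(wt c, j) =
   \sum_(T : {set 'I_n} | #|T| == j) #|[set c | T \subset supp c & c \in C]|)%N.
  transitivity (\sum_(c in C) \sum_(T : {set 'I_n} | #|T| == j) (T \subset supp c : nat))%N.
    apply: eq_bigr => c _.
    by rewrite -[wt c]/#|supp c| -cards_draws card_cond.
  rewrite exchange_big /=; apply: eq_bigr => T _.
  by rewrite card_cond.
rewrite E big_distrr /=.
rewrite (eq_bigr (fun _ => #|C|)) => [|T /eqP HT]; last first.
  have -> : [set c | T \subset supp c & c \in C] = [set c in C | T \subset supp c].
    by apply/setP => c; rewrite !inE andbC.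
  by rewrite mulnC -{1}HT (count_uniform linC Hd) // HT.
rewrite sum_nat_const mulnC; congr (_ * _)%N.
by rewrite -[n in RHS]card_ord -card_draws; apply: eq_card => T; rewrite !inE.
Qed.

Fixpoint ffr (j : nat) (w : rat) : rat :=
  if j is j'.+1 then ffr j' w * (w - j'%:R) else 1.

Definition g2 (n : rat) (j : nat) : rat :=
  match j with
  | 0 => (1 * n ^+ 2)
  | 1 => (4 - 4 * n ^+ 1)
  | 2 => (4)
  | 3 => 0
  | 4 => 0
  | 5 => 0
  | 6 => 0
  | 7 => 0
  | _ => 0
  end.

Definition g4 (n : rat) (j : nat) : rat :=
  match j with
  | 0 => (1 * n ^+ 4)
  | 1 => (16 - 32 * n ^+ 1 + 24 * n ^+ 2 - 8 * n ^+ 3)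
  | 2 => (112 - 96 * n ^+ 1 + 24 * n ^+ 2)
  | 3 => (96 - 32 * n ^+ 1)
  | 4 => (16)
  | 5 => 0
  | 6 => 0
  | 7 => 0
  | _ => 0
  end.

Definition g6 (n : rat) (j : nat) : rat :=
  match j with
  | 0 => (1 * n ^+ 6)
  | 1 => (64 - 192 * n ^+ 1 + 240 * n ^+ 2 - 160 * n ^+ 3 + 60 * n ^+ 4 - 12 * n ^+ 5)
  | 2 => ((1 * 1000 + 984) - (2 * 1000 + 880) * n ^+ 1 + (1 * 1000 + 680) * n ^+ 2 - 480 * n ^+ 3 + 60 * n ^+ 4)
  | 3 => ((5 * 1000 + 760) - (4 * 1000 + 800) * n ^+ 1 + (1 * 1000 + 440) * n ^+ 2 - 160 * n ^+ 3)
  | 4 => ((4 * 1000 + 160) - (1 * 1000 + 920) * n ^+ 1 + 240 * n ^+ 2)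
  | 5 => (960 - 192 * n ^+ 1)
  | 6 => (64)
  | 7 => 0
  | _ => 0
  end.

Definition g8 (n : rat) (j : nat) : rat :=
  match j with
  | 0 => (1 * n ^+ 8)
  | 1 => (256 - (1 * 1000 + 24) * n ^+ 1 + (1 * 1000 + 792) * n ^+ 2 - (1 * 1000 + 792) * n ^+ 3 + (1 * 1000 + 120) * n ^+ 4 - 448 * n ^+ 5 + 112 * n ^+ 6 - 16 * n ^+ 7)
  | 2 => ((32 * 1000 + 512) - (64 * 1000 + 512) * n ^+ 1 + (55 * 1000 + 552) * n ^+ 2 - (26 * 1000 + 880) * n ^+ 3 + (7 * 1000 + 840) * n ^+ 4 - (1 * 1000 + 344) * n ^+ 5 + 112 * n ^+ 6)
  | 3 => ((247 * 1000 + 296) - (308 * 1000 + 224) * n ^+ 1 + (161 * 1000 + 280) * n ^+ 2 - (44 * 1000 + 800) * n ^+ 3 + (6 * 1000 + 720) * n ^+ 4 - 448 * n ^+ 5)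
  | 4 => ((435 * 1000 + 456) - (358 * 1000 + 400) * n ^+ 1 + (116 * 1000 + 480) * n ^+ 2 - (17 * 1000 + 920) * n ^+ 3 + (1 * 1000 + 120) * n ^+ 4)
  | 5 => ((268 * 1000 + 800) - (143 * 1000 + 360) * n ^+ 1 + (26 * 1000 + 880) * n ^+ 2 - (1 * 1000 + 792) * n ^+ 3)
  | 6 => ((68 * 1000 + 96) - (21 * 1000 + 504) * n ^+ 1 + (1 * 1000 + 792) * n ^+ 2)
  | 7 => ((7 * 1000 + 168) - (1 * 1000 + 24) * n ^+ 1)
  | _ => (256)
  end.

Lemma newton8 (n w : rat) : (n - 2 * w) ^+ 8 = \sum_(j < 9) g8 n j * ffr j w.
Proof. rewrite !big_ord_recr big_ord0 /=. ring. Qed.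
Lemma newton6 (n w : rat) : (n - 2 * w) ^+ 6 = \sum_(j < 9) g6 n j * ffr j w.
Proof. rewrite !big_ord_recr big_ord0 /=. ring. Qed.
Lemma newton4 (n w : rat) : (n - 2 * w) ^+ 4 = \sum_(j < 9) g4 n j * ffr j w.
Proof. rewrite !big_ord_recr big_ord0 /=. ring. Qed.
Lemma newton2 (n w : rat) : (n - 2 * w) ^+ 2 = \sum_(j < 9) g2 n j * ffr j w.
Proof. rewrite !big_ord_recr big_ord0 /=. ring. Qed.

Lemma mom8 (n : rat) : \sum_(j < 9) g8 n j * ffr j n / 2 ^+ j =
  105 * n ^+ 4 - 420 * n ^+ 3 + 588 * n ^+ 2 - 272 * n.
Proof. rewrite !big_ord_recr big_ord0 /=. by field. Qed.
Lemma mom6 (n : rat) : \sum_(j < 9) g6 n j * ffr j n / 2 ^+ j =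
  15 * n ^+ 3 - 30 * n ^+ 2 + 16 * n.
Proof. rewrite !big_ord_recr big_ord0 /=. by field. Qed.
Lemma mom4 (n : rat) : \sum_(j < 9) g4 n j * ffr j n / 2 ^+ j =
  3 * n ^+ 2 - 2 * n.
Proof. rewrite !big_ord_recr big_ord0 /=. by field. Qed.
Lemma mom2 (n : rat) : \sum_(j < 9) g2 n j * ffr j n / 2 ^+ j = n.
Proof. rewrite !big_ord_recr big_ord0 /=. by field. Qed.

Lemma ffr_bin (w j : nat) : ffr j w%:R = 'C(w, j)%:R * j`!%:R.
Proof.
elim: j => [|j IH] /=; first by rewrite bin0 fact0 mulr1.
rewrite IH; case: (leqP j w) => Hjw.
  rewrite -!natrM bin_ffact -natrB // -natrM bin_ffact ffactnSr //.
rewrite !bin_small ?mul0r //; lia.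
Qed.

Lemma moment_rat n (C : {set 'rV['F_2]_n}) dp j :
  linear_code C ->
  (forall y, y \in dual_code C -> y != 0 -> (dp <= wt y)%N) ->
  (j < dp)%N ->
  \sum_(c in C) ffr j (wt c)%:R = #|C|%:R * ffr j n%:R / 2 ^+ j.
Proof.
move=> linC Hd Hj.
have := congr1 (fun m : nat => m%:R : rat) (moment_nat linC Hd Hj).
rewrite /= natrM natrX natr_sum natrM => E.
under eq_bigr => c _ do rewrite ffr_bin.
rewrite -mulr_suml ffr_bin.
have H2 : (2 : rat) ^+ j != 0 by rewrite expf_eq0 andbC.
apply: (mulfI H2); rewrite [LHS]mulrA E; field.
by [].
Qed.

Lemma psum n (C : {set 'rV['F_2]_n}) dp (P : rat -> rat) (g : nat -> rat) :
  linear_code C ->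
  (forall y, y \in dual_code C -> y != 0 -> (dp <= wt y)%N) ->
  (8 < dp)%N ->
  (forall w, P w = \sum_(j < 9) g j * ffr j w) ->
  \sum_(c in C) P (wt c)%:R = #|C|%:R * \sum_(j < 9) g j * ffr j n%:R / 2 ^+ j.
Proof.
move=> linC Hd H8 HP.
under eq_bigr => c _ do rewrite HP.
rewrite exchange_big mulr_sumr; apply: eq_bigr => j _.
rewrite -mulr_sumr (moment_rat linC Hd); first by rewrite !mulrA [g j * _]mulrC.
have := ltn_ord j; lia.
Qed.

Lemma final_alg (nr Y : rat) : 9 <= nr ->
  (15 * nr ^+ 3 - 30 * nr ^+ 2 + 16 * nr) - (nr ^+ 2 + Y) * (3 * nr ^+ 2 - 2 * nr)
    + nr ^+ 2 * Y * nr = 0 ->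
  (105 * nr ^+ 4 - 420 * nr ^+ 3 + 588 * nr ^+ 2 - 272 * nr)
    - (nr ^+ 2 + Y) * (15 * nr ^+ 3 - 30 * nr ^+ 2 + 16 * nr)
    + nr ^+ 2 * Y * (3 * nr ^+ 2 - 2 * nr) = 0 -> False.
Proof.
move=> H9 E1 E2.
have h1 : nr * (nr - 1) * (nr - 2) * (Y - (3 * nr - 8)) = 0 by rewrite -E1; ring.
have hY : Y = 3 * nr - 8.
  move/eqP: h1; rewrite !mulf_eq0 => /orP[/orP[/orP[|]|]|] /eqP h; lra.
subst Y.
have h2 : nr * (nr - 1) * (nr - 2) * (nr - 3) * (nr - 4) * 6 = 0 by rewrite -oppr0 -E2; ring.
move/eqP: h2; rewrite !mulf_eq0 => /orP[/orP[/orP[/orP[/orP[|]|]|]|]|] /eqP h; lra.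
Qed.

Lemma wt_le n (v : 'rV['F_2]_n) : (wt v <= n)%N.
Proof. by rewrite /wt; apply: leq_trans (max_card _) _; rewrite card_ord. Qed.

Lemma wt0 n : wt (0 : 'rV['F_2]_n) = 0%N.
Proof.
rewrite /wt; apply/eqP; rewrite cards_eq0; apply/eqP/setP => i.
by rewrite !inE mxE eqxx.
Qed.

Theorem theorem4p2 :
  ~ (exists (n : nat) (C : {set 'rV['F_2]_n}) (d dperp t : nat),
      [/\ linear_code C, ones n \in C, min_nz_weight C d,
          min_nz_weight (dual_code C) dperp & (0 < t)%N] /\
      [/\ dperp = (t + 3)%N, num_weights_upto C t = 3%N, ~~ odd n,
          (forall w : nat, (exists2 c, c \in C & (c != 0) && (wt c == w)%N) <->
                           w \in [:: d; n./2; (n - d)%N; n]) &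
          (8 < dperp)%N]).
Proof.
move=> [n [C [d [dp [t [[linC _ [[c0 c0C /andP[_ /eqP c0w]] _]
   [[y yD /andP[ynz /eqP yw]] Hd] _] [_ _ Hev Hw H8]]]]]]].
have n9 : (9 <= n)%N by have := wt_le y; lia.
have dn : (d <= n)%N by rewrite -c0w wt_le.
set nr : rat := n%:R.
set Y : rat := (nr - 2 * d%:R) ^+ 2.
pose P (x : rat) := x ^+ 2 * (x ^+ 2 - nr ^+ 2) * (x ^+ 2 - Y).
have Hx : forall c, c \in C -> P (nr - 2 * (wt c)%:R) = 0.
  move=> c cC; case: (eqVneq c 0) => [->|cnz].
    by rewrite /P wt0 mulr0 subr0 subrr mulr0 mul0r.
  have : wt c \in [:: d; n./2; (n - d)%N; n] by apply/Hw; exists c; rewrite ?cnz ?eqxx.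
  rewrite !inE => /or4P[] /eqP ->.
  - by rewrite /P /Y subrr mulr0.
  - have -> : nr = 2 * (n./2)%:R.
      rewrite /nr -{1}(odd_double_half n) (negbTE Hev) add0n -muln2 natrM mulrC.
      by [].
    by rewrite /P subrr expr0n /= !mul0r.
  - rewrite /P /Y natrB // -/nr.
    have -> : (nr - 2 * (nr - d%:R)) ^+ 2 = (nr - 2 * d%:R) ^+ 2 by ring.
    by rewrite subrr mulr0.
  - rewrite /P -/nr.
    have -> : (nr - 2 * nr) ^+ 2 = nr ^+ 2 by ring.
    by rewrite subrr mulr0 mul0r.
have N0 : (#|C|%:R : rat) != 0.
  rewrite pnatr_eq0 -lt0n; apply/card_gt0P; exists 0; by case/andP: linC.
have S2 := psum (P := fun w => (nr - 2 * w) ^+ 2) (g := g2 nr) linC Hd H8 (fun w => newton2 nr w).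
have S4 := psum (P := fun w => (nr - 2 * w) ^+ 4) (g := g4 nr) linC Hd H8 (fun w => newton4 nr w).
have S6 := psum (P := fun w => (nr - 2 * w) ^+ 6) (g := g6 nr) linC Hd H8 (fun w => newton6 nr w).
have S8 := psum (P := fun w => (nr - 2 * w) ^+ 8) (g := g8 nr) linC Hd H8 (fun w => newton8 nr w).
rewrite /= ?mom2 ?mom4 ?mom6 ?mom8 in S2 S4 S6 S8.
have E1 : \sum_(c in C) ((nr - 2 * (wt c)%:R) ^+ 6 - (nr ^+ 2 + Y) * (nr - 2 * (wt c)%:R) ^+ 4
     + nr ^+ 2 * Y * (nr - 2 * (wt c)%:R) ^+ 2) = 0.
  by apply: big1 => c cC; rewrite -(Hx c cC) /P; ring.
have E2 : \sum_(c in C) ((nr - 2 * (wt c)%:R) ^+ 8 - (nr ^+ 2 + Y) * (nr - 2 * (wt c)%:R) ^+ 6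
     + nr ^+ 2 * Y * (nr - 2 * (wt c)%:R) ^+ 4) = 0.
  apply: big1 => c cC.
  have -> : forall x : rat, x ^+ 8 - (nr ^+ 2 + Y) * x ^+ 6 + nr ^+ 2 * Y * x ^+ 4 = x ^+ 2 * P x.
    by move=> x; rewrite /P; ring.
  by rewrite Hx // mulr0.
rewrite big_split /= sumrB -!mulr_sumr S2 S4 S6 in E1.
rewrite big_split /= sumrB -!mulr_sumr S4 S6 S8 in E2.
apply: (@final_alg nr Y).
- by rewrite /nr ler_nat.
- have F1 : #|C|%:R * ((15 * nr ^+ 3 - 30 * nr ^+ 2 + 16 * nr)
      - (nr ^+ 2 + Y) * (3 * nr ^+ 2 - 2 * nr) + nr ^+ 2 * Y * nr) = 0.
    by rewrite -E1; ring.
  by move/eqP: F1; rewrite mulf_eq0 (negbTE N0) => /eqP.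
- have F2 : #|C|%:R * ((105 * nr ^+ 4 - 420 * nr ^+ 3 + 588 * nr ^+ 2 - 272 * nr)
    - (nr ^+ 2 + Y) * (15 * nr ^+ 3 - 30 * nr ^+ 2 + 16 * nr)
    + nr ^+ 2 * Y * (3 * nr ^+ 2 - 2 * nr)) = 0.
    by rewrite -E2; ring.
  by move/eqP: F2; rewrite mulf_eq0 (negbTE N0) => /eqP.
Qed.
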